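(* In the two-door cascading memoryless semi-fractional setting, there is an optimal semi-fractional sequence $\pi$, that is, $\mathbb{E}[\pi]\le\mathbb{E}[\pi']$ for every semi-fractional sequence $\pi'$.
   Context: Two cascading memoryless doors with durations: parameters $p_1,p_2\in(0,1)$, $q_1=1-p_1$, $q_2=1-p_2$, and $c>0$. Both doors start closed. A semi-fractional sequence is an infinite alternating sequence of knocks $1^{t_1}\,2\,1^{t_2}\,2\cdots$ with real $t_j\ge0$. A 1-knock $1^t$ takes $t$ time units and, if door 1 is closed, opens it with probability $1-q_1^t$, independently of everything else. A 2-knock takes $c$ time units and opens door 2 with probability $p_2$ (independently) if door 1 is open at that time, and with probability $0$ otherwise. There is no feedback. The running time is the time at which both doors are open, and $\mathbb{E}[\pi]$ is its expectation for sequence $\pi$. *)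

(* Defs.v *)
From HB Require Import structures.
From mathcomp Require Import all_boot all_order all_algebra.
From mathcomp Require Import all_classical all_reals all_analysis.
Set Implicit Arguments. Unset Strict Implicit. Unset Printing Implicit Defensive.
Import Order.TTheory GRing.Theory Num.Theory.
Local Open Scope ring_scope.

(* A semi-fractional sequence 1^{t_1} 2 1^{t_2} 2 ... is represented by
   t : nat -> R with t k = t_{k+1} (>= 0).
   cumT t k = t_1 + ... + t_k = total 1-knock time before the k-th 2-knock. *)
Definition cumT (R : realType) (t : nat -> R) (k : nat) : R := \sum_(i < k) t i.

(* Probability that door 1 is still closed after total 1-knock time s. *)
Definition closed1 (R : realType) (p1 : R) (s : R) : R := (1 - p1) `^ s.

(* Probability that both doors are NOT yet open after the first k blocks
   (k 1-knocks and k 2-knocks).  Door 1 is first seen open at 2-knock j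
   (1 <= j <= k) with probability q1^{T_{j-1}} - q1^{T_j}; then 2-knocks
   j..k all fail with probability q2^{k-j+1}. *)
Definition survival (R : realType) (p1 p2 : R) (t : nat -> R) (k : nat) : R :=
  closed1 p1 (cumT t k) +
  \sum_(1 <= j < k.+1)
     (closed1 p1 (cumT t j.-1) - closed1 p1 (cumT t j)) * (1 - p2) ^+ (k - j + 1).

(* Expected running time.  The running time takes values in the block end
   times S_k = sum_{i<=k} (t_i + c), so E = sum_{k>=0} (S_{k+1}-S_k) P(X > S_k);
   it is an extended real (+oo allowed). *)
Definition expected_time (R : realType) (p1 p2 c : R) (t : nat -> R) : \bar R :=
  (\sum_(0 <= k <oo) ((t k + c) * survival p1 p2 t k)%:E)%E.

Definition semi_fractional (R : realType) (t : nat -> R) : Prop :=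
  forall k, 0 <= t k.

(* Main.v *)
Require Import Defs.
From HB Require Import structures.
From mathcomp Require Import all_boot all_order all_algebra.
From mathcomp Require Import all_classical all_reals all_analysis.
From mathcomp Require Import zify lra.
Import Order.TTheory GRing.Theory Num.Theory.
Local Open Scope ring_scope.
Set Implicit Arguments. Unset Strict Implicit. Unset Printing Implicit Defensive.
Import numFieldNormedType.Exports.

Section Aux.
Variable R : realType.
Variables p1 p2 c : R.
Hypothesis hp1 : 0 < p1 < 1.
Hypothesis hp2 : 0 < p2 < 1.
Hypothesis hc : 0 < c.

Lemma tele (a : nat -> R) k :
  \sum_(1 <= j < k.+1) (a j.-1 - a j) = a 0%N - a k.
Proof.
elim: k => [|k IH]; first by rewrite big_geq // subrr.
by rewrite big_nat_recr //= IH addrA subrK.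
Qed.

Lemma cumT_le (t : nat -> R) : semi_fractional t -> forall j, cumT t j <= cumT t j.+1.
Proof. by move=> ht j; rewrite /cumT big_ord_recr /= lerDl. Qed.

Lemma closed1_le (t : nat -> R) : semi_fractional t -> forall j,
  closed1 p1 (cumT t j.+1) <= closed1 p1 (cumT t j).
Proof.
move=> ht j; rewrite /closed1; apply: ger_powR; last exact: cumT_le.
case/andP: hp1 => h0 h1; apply/andP; split; rewrite ?subr_gt0 // lerBlDr lerDl ltW //.
Qed.

Lemma surv_ge (t : nat -> R) : semi_fractional t -> forall k,
  (1 - p2) ^+ k <= survival p1 p2 t k.
Proof.
move=> ht k; rewrite /survival.
case/andP: hp2 => h20 h21.
have q20 : 0 <= 1 - p2 by rewrite subr_ge0 ltW.
have q21 : 1 - p2 <= 1 by rewrite lerBlDr lerDl ltW.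
set a := fun j => closed1 p1 (cumT t j).
have -> : closed1 p1 (cumT t k) = a k by [].
have H : \sum_(1 <= j < k.+1) (a j.-1 - a j) * (1 - p2) ^+ k <=
   \sum_(1 <= j < k.+1) (closed1 p1 (cumT t j.-1) - closed1 p1 (cumT t j)) * (1 - p2) ^+ (k - j + 1).
  rewrite big_nat_cond [X in _ <= X]big_nat_cond; apply: ler_sum => j /andP[/andP[j1 jk] _].
  apply: ler_wpM2l.
    by rewrite subr_ge0 /a; case: j j1 jk => // j _ _; exact: closed1_le.
  apply: ler_wiXn2l => //; rewrite addn1; lia.
rewrite -big_distrl /= tele in H.
have a0 : a 0%N = 1 by rewrite /a /closed1 /cumT big_ord0 powRr0.
rewrite a0 in H.
apply: le_trans (lerD (lexx _) H).
have ak : 0 <= a k by rewrite /a /closed1 powR_ge0.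
have ak1 : a k <= 1 by rewrite -a0; clear ak; elim: k {H} => // k IH; apply: le_trans IH; exact: closed1_le.
have qk : (1 - p2) ^+ k <= 1 by exact: exprn_ile1.
nra.
Qed.

Notation PT := {ptws nat -> R}.

Lemma cont_sum (I : Type) (s : seq I) (F : I -> PT -> R) :
  (forall i, continuous (F i)) -> continuous (fun x => \sum_(i <- s) F i x).
Proof.
move=> hF; elim: s => [|i s IH].
  have -> : (fun x : PT => \sum_(i <- [::]) F i x) = fun=> 0.
    by apply/funext => x; rewrite big_nil.
  exact: cst_continuous.
have -> : (fun x : PT => \sum_(j <- i :: s) F j x) = fun x => F i x + \sum_(j <- s) F j x.
  by apply/funext => x; rewrite big_cons.
by move=> x; apply: (@continuousD R R^o PT); [exact: hF | exact: IH].
Qed.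

Lemma cont_proj k : continuous (fun t : PT => t k).
Proof. exact: (@proj_continuous nat (fun=> R) k). Qed.

Lemma cont_cumT k : continuous (fun t : PT => cumT t k).
Proof. by apply: cont_sum => i; exact: cont_proj. Qed.

Lemma cont_closed1 k : continuous (fun t : PT => closed1 p1 (cumT t k)).
Proof.
have q0 : (1 - p1 == 0) = false.
  by case/andP: hp1 => _ h; apply/negbTE; rewrite subr_eq0 eq_sym lt_eqF.
rewrite /closed1 /powR q0.
move=> x.
have h1 : {for x, continuous (fun t : PT => cumT t k * ln (1 - p1))}.
  by apply: (@continuousM R PT); [exact: cont_cumT | exact: cst_continuous].
exact: (continuous_comp h1 (@continuous_expR R _)).
Qed.

Lemma cont_surv k : continuous (fun t : PT => survival p1 p2 t k).
Proof.
have -> : (fun t : PT => survival p1 p2 t k) = fun t : PT => closed1 p1 (cumT t k) +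
  \sum_(1 <= j < k.+1)
     (closed1 p1 (cumT t j.-1) - closed1 p1 (cumT t j)) * (1 - p2) ^+ (k - j + 1) by [].
move=> x; apply: (@continuousD R R^o PT); first exact: cont_closed1.
apply: cont_sum => j y; apply: (@continuousM R PT); last exact: cst_continuous.
by apply: (@continuousB R R^o PT); exact: cont_closed1.
Qed.

Definition PS N (t : nat -> R) := \sum_(0 <= k < N) ((t k + c) * survival p1 p2 t k).

Lemma cont_PS N : continuous (PS N : PT -> R).
Proof.
apply: cont_sum => k x; apply: (@continuousM R PT); last exact: cont_surv.
by apply: (@continuousD R R^o PT); [exact: cont_proj | exact: cst_continuous].
Qed.

Lemma term_ge0 (t : nat -> R) k : semi_fractional t ->
  0 <= (t k + c) * survival p1 p2 t k.
Proof.
move=> ht; apply: mulr_ge0; first by rewrite addr_ge0 // ltW.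
apply: le_trans (surv_ge ht k); apply: exprn_ge0.
by case/andP: hp2 => _ h; rewrite subr_ge0 ltW.
Qed.

Lemma PS_ge0 (t : nat -> R) N : semi_fractional t -> 0 <= PS N t.
Proof. by move=> ht; rewrite /PS; apply: sumr_ge0 => k _; exact: term_ge0. Qed.

Lemma PS_le_E (t : nat -> R) N : semi_fractional t ->
  ((PS N t)%:E <= expected_time p1 p2 c t)%E.
Proof.
move=> ht; rewrite /PS -sumEFin /expected_time.
apply: nneseries_lim_ge => n _ _; rewrite lee_fin; exact: term_ge0.
Qed.

Lemma term_le_E (t : nat -> R) k : semi_fractional t ->
  (((t k + c) * survival p1 p2 t k)%:E <= expected_time p1 p2 c t)%E.
Proof.
move=> ht; apply: le_trans (PS_le_E k.+1 ht); rewrite lee_fin /PS big_nat_recr //=.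
by rewrite lerDr; exact: (PS_ge0 k ht).
Qed.

Lemma E_ge0 (t : nat -> R) : semi_fractional t -> (0 <= expected_time p1 p2 c t)%E.
Proof. by move=> ht; apply: nneseries_ge0 => n _ _; rewrite lee_fin; exact: term_ge0. Qed.

Lemma E_le (t : nat -> R) r : semi_fractional t -> (forall N, PS N t <= r) ->
  (expected_time p1 p2 c t <= r%:E)%E.
Proof.
move=> ht hN; rewrite /expected_time; apply: lime_le.
  by apply: is_cvg_nneseries => n _ _; rewrite lee_fin; exact: term_ge0.
by apply: nearW => N; rewrite sumEFin lee_fin; exact: hN.
Qed.

End Aux.

Unset Implicit Arguments.

Theorem mainTheorem16 (R : realType) (p1 p2 c : R) :
  0 < p1 < 1 -> 0 < p2 < 1 -> 0 < c ->
  exists t : nat -> R, semi_fractional t /\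
    forall t' : nat -> R, semi_fractional t' ->
      (expected_time p1 p2 c t <= expected_time p1 p2 c t')%E.
Proof.
move=> hp1 hp2 hc.
Local Open Scope classical_set_scope.
Local Open Scope ring_scope.
set S : set (\bar R) := fun y => exists t, semi_fractional t /\ expected_time p1 p2 c t = y.
have mlb t : semi_fractional t -> (ereal_inf S <= expected_time p1 p2 c t)%E.
  by move=> ht; apply: ereal_inf_lbound; exists t.
have m0 : (0 <= ereal_inf S)%E.
  by apply: le_ereal_inf_tmp => y [t [ht <-]]; exact: (E_ge0 hp1 hp2 hc).
case Em: (ereal_inf S) => [r| |]; last by rewrite Em in m0.
2:{ exists (fun=> 0); split => [k//|t' ht'].
    by have := mlb t' ht'; rewrite Em leye_eq => /eqP ->; exact: leey. }
have hts : forall n : nat, exists t, semi_fractional t /\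
    (expected_time p1 p2 c t < (r + n.+1%:R^-1)%:E)%E.
  move=> n; have : (ereal_inf S < (r + n.+1%:R^-1)%:E)%E.
    by rewrite Em lte_fin ltrDl invr_gt0 ltr0n.
  by case/ereal_inf_lt => _ [t [ht <-]] h; exists t.
have [ts hts'] := choice hts.
have q2gt0 : 0 < 1 - p2 by case/andP: hp2 => _ h; rewrite subr_gt0.
pose B k := (r + 1) / (1 - p2) ^+ k.
have tsB n k : 0 <= ts n k <= B k.
  case: (hts' n) => hsf hlt; rewrite hsf /=.
  rewrite ler_pdivlMr ?exprn_gt0 //.
  have h1 := term_le_E hp1 hp2 hc k hsf.
  have h2 : ts n k * (1 - p2) ^+ k <= (ts n k + c) * survival p1 p2 (ts n) k.
    apply: ler_pM => //; first by apply: exprn_ge0; exact: ltW.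
      by rewrite lerDl ltW.
    exact: (surv_ge hp1 hp2 hc).
  have h3 : (r + n.+1%:R^-1) <= r + 1 by rewrite lerD2l invf_le1 // ?ler1n ?ltr0n.
  have h4 := le_lt_trans h1 hlt; rewrite lte_fin in h4.
  apply: ltW; apply: le_lt_trans h2 _; exact: lt_le_trans h4 h3.
pose K : set {ptws nat -> R} := fun t => forall k, (`[0, B k]%classic : set R) (t k).
have cK : compact K.
  have T0 := (@tychonoff nat (fun=> numFieldTopology.Real_sort__canonical__topology_structure_Topological R) (fun k => `[0, B k]%classic) (fun k => @segment_compact R 0 (B k))).
  exact T0.
have FK : ((ts : nat -> {ptws nat -> R}) @ \oo) K.
  have : \forall n \near \oo, K (ts n) by apply: nearW => n k; rewrite /= in_itv /=; exact: tsB.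
  exact.
have [p [Kp clp]] := cK _ _ FK.
have sp : semi_fractional p by move=> k; have := Kp k; rewrite /= in_itv /= => /andP[].
have PSp N : PS p1 p2 c N p <= r.
  apply/ler_addgt0Pr => e e0.
  have e2 : 0 < e / 2 by rewrite divr_gt0.
  have A1 : ((ts : nat -> {ptws nat -> R}) @ \oo) [set t | exists n, t = ts n /\ n.+1%:R^-1 < e / 2].
    by apply: filterS (near_infty_natSinv_lt (PosNum e2)) => n h; exists n.
  have B1 : nbhs p [set t : {ptws nat -> R} | `|PS p1 p2 c N p - PS p1 p2 c N t| < e / 2].
    exact: (@cvgr_dist_lt R R^o _ _ _ _ _ (@cont_PS R p1 p2 c hp1 N p) _ e2).
  have [t [[n [-> hn]] hd]] := clp _ _ A1 B1.
  have h1 := le_lt_trans (PS_le_E hp1 hp2 hc N (proj1 (hts' n))) (proj2 (hts' n)).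
  rewrite lte_fin in h1.
  have := ltr_distlDr hd.
  move=> hh; have he : e = e / 2 + e / 2 by rewrite -splitr.
  rewrite he; move: (e / 2) (n.+1%:R^-1) he hn h1 hh => x y _ hn h1 hh; lra.
exists p; split => // t' ht'.
apply: le_trans (mlb t' ht'); rewrite Em; exact: (E_le hp1 hp2 hc).
Qed.
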